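(* Let $V$ be a real vector space of finite even dimension $n>2$ with a quadratic form $Q$ of anti-Lorentz signature $(1,n-1)$, and let $\rho$ be a $c$-compatible irreducible representation of $\mathbb{C}l(V)$ on a finite-dimensional complex vector space $K$ with nondegenerate hermitian form $(\cdot,\cdot)$, with chirality operator $\chi$. Let $u,v\in V$. Then the operator $\rho(u)+\chi\rho(v)$ is Krein-positive iff $u+v$ and $u-v$ are both timelike and future-directed.
   Context: $Cl(V,Q)$ is the real Clifford algebra with $v^2=+Q(v)$, $\mathbb{C}l(V)$ its complexification with complex conjugation $c$, $T$ the linear antiautomorphism restricting to the identity on $V$, $a^\times=c(T(a))$. $\rho$ is $c$-compatible if $(\rho(a)\psi,\phi)=(\psi,\rho(a^\times)\phi)$. A vector $v$ is timelike if $Q(v)>0$. The chirality operator is $\chi=(-i)^{n/2+q}\rho(\omega)$ with $q=n-1$ and $\omega=e_1\cdots e_n$ the volume element of a pseudo-orthonormal basis. An operator $A$ on $K$ is Krein-positive if $(\psi,A\psi)>0$ for all nonzero $\psi\in K$. The time orientation is fixed compatibly with the Krein product: a timelike vector $e$ is future-directed iff $\rho(e)$ is Krein-positive. *)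

(* Defs.v *)
From HB Require Import structures.
From mathcomp Require Import all_boot all_order all_algebra.
From mathcomp Require Import reals complex.
Set Implicit Arguments. Unset Strict Implicit. Unset Printing Implicit Defensive.
Import Order.TTheory GRing.Theory Num.Theory.
Local Open Scope ring_scope.

Section CliffordDefs.
Variable R : realType.
Local Notation C := (R[i]).

(* The real vector space V is R^n (row vectors); the quadratic form is given
   by a symmetric Gram matrix G : Q(x) = x G x^T, B its polar bilinear form. *)
Definition Bform n (G : 'M[R]_n) (x y : 'rV[R]_n) : R := (x *m G *m y^T) 0 0.
Definition Qform n (G : 'M[R]_n) (x : 'rV[R]_n) : R := Bform G x x.

Definition anti_lorentz n (G : 'M[R]_n) : Prop :=
  G^T = G /\
  exists P : 'M[R]_n, P \in unitmx /\
    P *m G *m P^T = diag_mx (\row_(i < n) (if val i == 0%N then 1 else -1)).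

Definition pseudo_orthonormal n (G : 'M[R]_n) (b : 'I_n -> 'rV[R]_n) : Prop :=
  forall i j : 'I_n, if i == j then (Qform G (b i) == 1) || (Qform G (b i) == -1)
                     else Bform G (b i) (b j) == 0.

Definition timelike n (G : 'M[R]_n) (x : 'rV[R]_n) : Prop := 0 < Qform G x.

Definition adjmx p q (A : 'M[C]_(p, q)) : 'M[C]_(q, p) := map_mx (@conjc R) A^T.

(* K = C^m (column vectors) with hermitian form (psi,phi) = psi^* H phi,
   antilinear in the first slot. *)
Definition krein m (H : 'M[C]_m) (psi phi : 'cV[C]_m) : C :=
  (adjmx psi *m H *m phi) 0 0.

Definition hermitian_mx m (H : 'M[C]_m) : Prop := adjmx H = H.

Definition krein_positive m (H : 'M[C]_m) (A : 'M[C]_m) : Prop :=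
  forall psi : 'cV[C]_m, psi != 0 -> 0 < krein H psi (A *m psi).

(* A representation rho of Cl(V) (complexified) on K is, by the universal
   property, an R-linear map V -> End(K) with rho(x)^2 = Q(x) Id. *)
Definition clifford_rep n m (G : 'M[R]_n) (rho : 'rV[R]_n -> 'M[C]_m) : Prop :=
  (forall (a : R) (x y : 'rV[R]_n), rho (a *: x + y) = (a%:C)%C *: rho x + rho y) /\
  (forall x, rho x *m rho x = ((Qform G x)%:C)%C%:M).

(* c-compatibility; since a |-> a^x is an antilinear antiautomorphism with
   v^x = v on V, and V generates Cl(V), it amounts to (rho(x) psi, phi) = (psi, rho(x) phi). *)
Definition c_compatible n m (H : 'M[C]_m) (rho : 'rV[R]_n -> 'M[C]_m) : Prop :=
  forall x psi phi, krein H (rho x *m psi) phi = krein H psi (rho x *m phi).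

(* Irreducible: K <> 0 and no complex subspace other than 0 and K is invariant
   (V together with the complex scalars generates CCl(V)). *)
Definition irreducible n m (rho : 'rV[R]_n -> 'M[C]_m) : Prop :=
  (0 < m)%N /\
  forall S : 'cV[C]_m -> Prop,
    S 0 -> (forall (a : C) psi phi, S psi -> S phi -> S (a *: psi + phi)) ->
    (forall x psi, S psi -> S (rho x *m psi)) ->
    (forall psi, S psi -> psi = 0) \/ (forall psi, S psi).

(* chirality operator chi = (-i)^(n/2+q) rho(e_1...e_n), q = n-1 *)
Definition chirality n m (rho : 'rV[R]_n -> 'M[C]_m) (b : 'I_n -> 'rV[R]_n) : 'M[C]_m :=
  (- 'i)%C ^+ (n./2 + n.-1) *: \big[mulmx/1%:M]_(i < n) rho (b i).

(* time orientation fixed by the Krein product *)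
Definition future_directed n m (G : 'M[R]_n) (H : 'M[C]_m)
    (rho : 'rV[R]_n -> 'M[C]_m) (e : 'rV[R]_n) : Prop :=
  timelike G e /\ krein_positive H (rho e).

End CliffordDefs.

(* Main.v *)
Require Import Defs.
From HB Require Import structures.
From mathcomp Require Import all_boot all_order all_algebra.
From mathcomp Require Import reals complex.
From mathcomp Require Import ring lra.
Import Order.TTheory GRing.Theory Num.Theory.
Local Open Scope ring_scope.
Section Krein.
Variable R : realType.
Local Notation C := (R[i]).
Variable m : nat.
Variable H : 'M[C]_m.

Lemma adjmxD (a b : 'cV[C]_m) : adjmx (a + b) = adjmx a + adjmx b.
Proof. by apply/matrixP => i j; rewrite !mxE rmorphD. Qed.
Lemma adjmxZ (c : C) (a : 'cV[C]_m) : adjmx (c *: a) = (c^*)%C *: adjmx a.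
Proof. by apply/matrixP => i j; rewrite !mxE rmorphM. Qed.
Lemma adjmx0 : adjmx (0 : 'cV[C]_m) = 0.
Proof. by apply/matrixP => i j; rewrite !mxE rmorph0. Qed.

Lemma kreinDl a b c : krein H (a + b) c = krein H a c + krein H b c.
Proof. by rewrite /krein adjmxD !mulmxDl mxE. Qed.
Lemma kreinDr a b c : krein H a (b + c) = krein H a b + krein H a c.
Proof. by rewrite /krein mulmxDr mxE. Qed.
Lemma kreinZl (k : C) a c : krein H (k *: a) c = (k^*)%C * krein H a c.
Proof. by rewrite /krein adjmxZ -!scalemxAl mxE. Qed.
Lemma kreinZr (k : C) a c : krein H a (k *: c) = k * krein H a c.
Proof. by rewrite /krein -scalemxAr mxE. Qed.
Lemma krein0l c : krein H 0 c = 0.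
Proof. by rewrite /krein adjmx0 !mul0mx mxE. Qed.
Lemma krein0r c : krein H c 0 = 0.
Proof. by rewrite /krein mulmx0 mxE. Qed.
Lemma kreinNl a c : krein H (- a) c = - krein H a c.
Proof. by rewrite -scaleN1r kreinZl rmorphN rmorph1 mulN1r. Qed.
Lemma kreinNr a c : krein H a (- c) = - krein H a c.
Proof. by rewrite -scaleN1r kreinZr mulN1r. Qed.
Lemma kreinBl a b c : krein H (a - b) c = krein H a c - krein H b c.
Proof. by rewrite kreinDl kreinNl. Qed.
Lemma kreinBr a b c : krein H a (b - c) = krein H a b - krein H a c.
Proof. by rewrite kreinDr kreinNr. Qed.

Definition kadj (M M' : 'M[C]_m) := forall a b, krein H (M *m a) b = krein H a (M' *m b).

Lemma kadjM M M' N N' : kadj M M' -> kadj N N' -> kadj (M *m N) (N' *m M').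
Proof. by move=> hM hN a b; rewrite -mulmxA hM hN mulmxA. Qed.
Lemma kadjZ M M' (k : C) : kadj M M' -> kadj (k *: M) ((k^*)%C *: M').
Proof. by move=> hM a b; rewrite -scalemxAl kreinZl hM -scalemxAl kreinZr. Qed.
Lemma kadj1 : kadj 1%:M 1%:M.
Proof. by move=> a b; rewrite !mul1mx. Qed.
End Krein.
Section Rho.
Variable R : realType.
Local Notation C := (R[i]).
Variables (n m : nat) (G : 'M[R]_n) (rho : 'rV[R]_n -> 'M[C]_m).
Hypothesis Gsym : G^T = G.
Hypothesis rhoL : forall (a : R) (x y : 'rV[R]_n), rho (a *: x + y) = (a%:C)%C *: rho x + rho y.
Hypothesis rhoQ : forall x, rho x *m rho x = ((Qform G x)%:C)%C%:M.

Lemma rho0 : rho 0 = 0.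
Proof.
have := rhoL 1 0 0; rewrite addr0 scaler0 scale1r.
by move/(congr1 (fun z => z - rho 0)); rewrite addrK subrr => <-.
Qed.
Lemma rhoD x y : rho (x + y) = rho x + rho y.
Proof. by have := rhoL 1 x y; rewrite scale1r rmorph1 scale1r. Qed.
Lemma rhoZ (a : R) x : rho (a *: x) = (a%:C)%C *: rho x.
Proof. by rewrite -[a *: x]addr0 rhoL rho0 addr0. Qed.
Lemma rhoN x : rho (- x) = - rho x.
Proof. by rewrite -scaleN1r rhoZ rmorphN rmorph1 scaleN1r. Qed.
Lemma rhoB x y : rho (x - y) = rho x - rho y.
Proof. by rewrite rhoD rhoN. Qed.
Lemma rho_sum (I : Type) (s : seq I) (c : I -> R) (f : I -> 'rV[R]_n) :
  rho (\sum_(i <- s) c i *: f i) = \sum_(i <- s) (c i)%:C%C *: rho (f i).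
Proof.
elim: s => [|i s IH]; first by rewrite !big_nil rho0.
by rewrite !big_cons rhoL IH.
Qed.

Lemma BformDl x y z : Bform G (x + y) z = Bform G x z + Bform G y z.
Proof. by rewrite /Bform !mulmxDl mxE. Qed.
Lemma BformDr x y z : Bform G x (y + z) = Bform G x y + Bform G x z.
Proof. by rewrite /Bform linearD mulmxDr mxE. Qed.
Lemma BformZl a x z : Bform G (a *: x) z = a * Bform G x z.
Proof. by rewrite /Bform -!scalemxAl mxE. Qed.
Lemma BformZr a x z : Bform G x (a *: z) = a * Bform G x z.
Proof. by rewrite /Bform linearZ -!scalemxAr mxE. Qed.
Lemma BformC x y : Bform G x y = Bform G y x.
Proof.
rewrite /Bform; transitivity (((x *m G *m y^T)^T) 0 0); first by rewrite [RHS]mxE.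
by rewrite !trmx_mul trmxK Gsym mulmxA.
Qed.
Lemma BformNl x z : Bform G (- x) z = - Bform G x z.
Proof. by rewrite -scaleN1r BformZl mulN1r. Qed.
Lemma BformNr x z : Bform G x (- z) = - Bform G x z.
Proof. by rewrite -scaleN1r BformZr mulN1r. Qed.

Lemma rho_anti x y : rho x *m rho y + rho y *m rho x = ((2 * Bform G x y)%:C)%C%:M.
Proof.
have e : rho x *m rho y + rho y *m rho x =
   rho (x + y) *m rho (x + y) - rho x *m rho x - rho y *m rho y.
  rewrite rhoD mulmxDl !mulmxDr.
  set a := rho x *m rho x; set b := rho x *m rho y; set c := rho y *m rho x; set d := rho y *m rho y.
  by rewrite [c + d]addrC addrACA -[_ - a - d]addrA -opprD [(a+d)+(b+c)]addrC addrK.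
rewrite e !rhoQ -!(raddfB (@scalar_mx _ m)) -!rmorphB; congr (_%:C%C%:M).
rewrite /Qform BformDl !BformDr (BformC y x); ring.
Qed.
Lemma rho_anti0 x y : Bform G x y = 0 -> rho x *m rho y = - (rho y *m rho x).
Proof.
move=> h; have := rho_anti x y; rewrite h mulr0 rmorph0 /= => e; have : rho x *m rho y + rho y *m rho x = 0 by rewrite e; apply/matrixP => i j; rewrite !mxE; case: (i == j).
by move/eqP; rewrite addr_eq0 => /eqP.
Qed.
End Rho.
Lemma size_ie n : size (index_enum 'I_n) = n.
Proof. by rewrite /index_enum unlock -enumT size_enum_ord. Qed.

Section Cliff.
Variable R : realType.
Local Notation C := (R[i]).
Variables (n m : nat) (G : 'M[R]_n) (rho : 'rV[R]_n -> 'M[C]_m) (H : 'M[C]_m).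
Variable b : 'I_n -> 'rV[R]_n.
Hypothesis Gsym : G^T = G.
Hypothesis rhoL : forall (a : R) (x y : 'rV[R]_n), rho (a *: x + y) = (a%:C)%C *: rho x + rho y.
Hypothesis rhoQ : forall x, rho x *m rho x = ((Qform G x)%:C)%C%:M.
Hypothesis po : pseudo_orthonormal G b.
Hypothesis compat : c_compatible H rho.

Local Notation e i := (rho (b i)).
Local Notation prod s := (\big[mulmx/1%:M]_(i <- s) e i).

Lemma e_anti i j : i != j -> e i *m e j = - (e j *m e i).
Proof.
move=> ij; apply: (@rho_anti0 R n m G rho Gsym rhoL rhoQ).
by have := po i j; rewrite (negbTE ij) => /eqP.
Qed.

Lemma e_prod j s : e j *m prod s = (-1)^+(count (fun i => i != j) s) *: (prod s *m e j).
Proof.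
elim: s => [|i s IH]; first by rewrite !big_nil mulmx1 mul1mx expr0 scale1r.
rewrite !big_cons /= mulmxA.
have [->|ij] := eqVneq i j.
  by rewrite /= add0n -mulmxA [in LHS]IH -scalemxAr !mulmxA.
have ji : j != i by rewrite eq_sym.
rewrite /= (e_anti _ _ ji) mulNmx -[in LHS]mulmxA [in LHS]IH -scalemxAr.
by rewrite -scaleN1r scalerA add1n exprS !mulmxA.
Qed.

Lemma sgn_sq (k : nat) : ((-1 : C) ^+ k) * ((-1) ^+ k) = 1.
Proof. by rewrite -exprD -signr_odd oddD addbb expr0. Qed.

Lemma prod_sq s : uniq s ->
  prod s *m prod s = ((-1)^+'C(size s, 2) * \prod_(i <- s) (Qform G (b i))%:C%C)%:M.
Proof.
elim: s => [|i s IH]; first by rewrite !big_nil mulmx1 /= mul1r.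
rewrite cons_uniq => /andP [nis us].
have c : count (fun k => k != i) s = size s.
  apply/eqP; rewrite -all_count; apply/allP => k ks; apply/eqP => ki.
  by rewrite -ki ks in nis.
have h : prod s *m e i = (-1)^+(size s) *: (e i *m prod s).
  by rewrite e_prod c scalerA sgn_sq scale1r.
rewrite !big_cons -mulmxA (mulmxA (prod s)) h.
rewrite -scalemxAl scalemxAr !mulmxA rhoQ -scalemxAr -mulmxA IH //.
rewrite mul_scalar_mx !scale_scalar_mx.
congr (_ %:M).
by rewrite binS bin1 addnC exprD; ring.
Qed.

Lemma kadj_e i : @kadj R m H (e i) (e i).
Proof. by move=> a c; apply: compat. Qed.

Lemma kadj_prod s : uniq s -> @kadj R m H (prod s) ((-1)^+'C(size s, 2) *: prod s).
Proof.
elim: s => [|i s IH].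
  move=> _ a c; by rewrite big_nil bin0n /= expr0 scale1r !mul1mx.
rewrite cons_uniq => /andP [nis us].
have c : count (fun k => k != i) s = size s.
  apply/eqP; rewrite -all_count; apply/allP => k ks; apply/eqP => ki.
  by rewrite -ki ks in nis.
have h : prod s *m e i = (-1)^+(size s) *: (e i *m prod s).
  by rewrite e_prod c scalerA sgn_sq scale1r.
have := @kadjM R m H _ _ _ _ (kadj_e i) (IH us).
rewrite -scalemxAl h scalerA -exprD big_cons /= binS bin1 addnC.
by [].
Qed.
End Cliff.

Section Basis.
Variable R : realType.
Variables (n : nat) (G : 'M[R]_n) (b : 'I_n -> 'rV[R]_n).
Hypothesis AL : anti_lorentz G.
Hypothesis po : pseudo_orthonormal G b.

Definition Bm := \matrix_i b i.

Lemma mx_form (M : 'M[R]_n) (f : 'I_n -> 'rV[R]_n) (Mdef : M = \matrix_i f i) i j :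
  (M *m G *m M^T) i j = Bform G (f i) (f j).
Proof.
rewrite Mdef /Bform !mxE; apply: eq_bigr => k _; rewrite !mxE; congr (_ * _).
by apply: eq_bigr => l _; rewrite !mxE.
Qed.

Lemma Bm_form : Bm *m G *m Bm^T = diag_mx (\row_i Qform G (b i)).
Proof.
apply/matrixP => i j; rewrite (mx_form _ b (erefl Bm)) !mxE.
have := po i j; have [->|ij] := eqVneq i j; first by rewrite mulr1n.
by move/eqP => ->; rewrite mulr0n.
Qed.

Lemma Qb_sq i : Qform G (b i) ^+ 2 = 1.
Proof. by have := po i i; rewrite eqxx => /orP [] /eqP ->; rewrite ?sqrrN expr1n. Qed.

Lemma prodD n' : \prod_(i < n'.+1) (if val i == 0%N then 1 else -1 : R) = (-1) ^+ n'.
Proof.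
rewrite big_ord_recl /= mul1r.
by rewrite (eq_bigr (fun _ => -1)) // prodr_const card_ord.
Qed.

Lemma prodD' k : (0 < k)%N -> \prod_(i < k) (if val i == 0%N then 1 else -1 : R) = (-1) ^+ k.-1.
Proof. by case: k => // k _; exact: prodD. Qed.

Lemma prodQ : (0 < n)%N -> \prod_(i < n) Qform G (b i) = (-1) ^+ n.-1.
Proof.
move=> n0.
case: AL => Gs [P [Pu PD]].
have d1 := congr1 determinant Bm_form.
have d2 := congr1 determinant PD.
rewrite !det_mulmx det_tr det_diag in d1.
rewrite !det_mulmx det_tr det_diag in d2.
have eD : \prod_i (\row_(i < n) (if val i == 0%N then 1 else -1 : R)) 0 i = (-1) ^+ n.-1.
  rewrite -(prodD' _ n0); apply: eq_bigr => i _; by rewrite mxE.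
rewrite eD in d2.
have eQ : \prod_i (\row_i Qform G (b i)) 0 i = \prod_(i < n) Qform G (b i).
  by apply: eq_bigr => i _; rewrite mxE.
rewrite eQ in d1.
set q := \prod_(i < n) Qform G (b i) in d1 *.
have q2 : q ^+ 2 = 1.
  by rewrite /q -prodrXl; rewrite (eq_bigr (fun _ => 1)) ?big1 // => i _; rewrite Qb_sq.
have s2 : ((-1 : R) ^+ n.-1) ^+ 2 = 1 by rewrite sqrr_sign.
have pos : 0 <= q * (-1) ^+ n.-1.
  rewrite -d1 -d2.
  have -> : \det Bm * \det G * \det Bm * (\det P * \det G * \det P) =
     (\det Bm * \det G * \det P) ^+ 2 by rewrite expr2; ring.
  exact: sqr_ge0.
move: q2 s2 pos => /eqP; rewrite sqrf_eq1 => /orP [] /eqP -> /eqP; rewrite sqrf_eq1 => /orP [] /eqP -> //.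
  by rewrite mul1r oppr_ge0 ler10.
by rewrite mulN1r oppr_ge0 ler10.
Qed.
Lemma Bm_unit : (0 < n)%N -> Bm \in unitmx.
Proof.
move=> n0; rewrite unitmxE unitfE.
have d1 := congr1 determinant Bm_form.
rewrite !det_mulmx det_tr det_diag in d1.
apply/eqP => d0; rewrite d0 !mul0r in d1.
have : \prod_i (\row_i Qform G (b i)) 0 i = (-1) ^+ n.-1.
  by rewrite -(prodQ n0); apply: eq_bigr => i _; rewrite mxE.
by rewrite -d1 => /eqP; rewrite eq_sym signr_eq0.
Qed.

Lemma expand x : (0 < n)%N -> x = \sum_i (x *m invmx Bm) 0 i *: b i.
Proof.
move=> n0.
have -> : \sum_i (x *m invmx Bm) 0 i *: b i = \sum_i (x *m invmx Bm) 0 i *: row i Bm.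
  by apply: eq_bigr => i _; rewrite rowK.
by rewrite -mulmx_sum_row -mulmxA mulVmx ?mulmx1 // Bm_unit.
Qed.
End Basis.
Lemma conj_mi (R : rcfType) : ((- 'i : R[i])^*)%C = 'i%C.
Proof. by apply/eqP; rewrite eq_complex /= oppr0 opprK !eqxx. Qed.
Lemma arith1 k : (0 < k)%N -> odd (k + (k.*2).-1 + 'C(k.*2, 2) + (k.*2).-1) = false.
Proof.
case: k => // k _.
rewrite bin2 doubleS !succnK -doubleS -doubleMl half_double.
rewrite !oddD oddM /= !odd_double /=.
by case: (odd k).
Qed.
Lemma arith2 k : (0 < k)%N -> odd (k + (k.*2).-1 + 'C(k.*2, 2)) = true.
Proof.
case: k => // k _.
rewrite bin2 doubleS !succnK -doubleS -doubleMl half_double.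
rewrite !oddD oddM /= !odd_double /=.
by case: (odd k).
Qed.

Section Chi.
Variable R : realType.
Local Notation C := (R[i]).
Variables (n m : nat) (G : 'M[R]_n) (rho : 'rV[R]_n -> 'M[C]_m) (H : 'M[C]_m).
Variable b : 'I_n -> 'rV[R]_n.
Hypothesis Gsym : G^T = G.
Hypothesis rhoL : forall (a : R) (x y : 'rV[R]_n), rho (a *: x + y) = (a%:C)%C *: rho x + rho y.
Hypothesis rhoQ : forall x, rho x *m rho x = ((Qform G x)%:C)%C%:M.
Hypothesis po : pseudo_orthonormal G b.
Hypothesis compat : c_compatible H rho.
Hypothesis AL : anti_lorentz G.
Hypothesis neven : ~~ odd n.
Hypothesis n2 : (2 < n)%N.

Local Notation e i := (rho (b i)).
Local Notation om := (\big[mulmx/1%:M]_(i < n) e i).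
Local Notation chi := (chirality rho b).

Lemma n0 : (0 < n)%N. Proof. by apply: leq_trans n2. Qed.
Lemma on1 : odd n.-1.
Proof. by move: neven n2; case: n => //= n' h _; rewrite negbK in h. Qed.

Lemma om_anti j : e j *m om = - (om *m e j).
Proof.
have h := count_predC (pred1 j) (index_enum 'I_n).
rewrite count_uniq_mem ?index_enum_uniq // mem_index_enum size_ie in h.
have c : count (fun i => i != j) (index_enum 'I_n) = n.-1 by rewrite -[in RHS]h.
rewrite (@e_prod R n m G rho b Gsym rhoL rhoQ po) c -signr_odd on1 expr1 scaleN1r.
by [].
Qed.

Lemma chi_anti x : chi *m rho x = - (rho x *m chi).
Proof.
rewrite /chirality (@expand R n G b AL po x n0) (@rho_sum R n m rho rhoL).
rewrite -!scalemxAl -scalemxAr -scalerN; congr (_ *: _).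
rewrite mulmx_sumr mulmx_suml -sumrN; apply: eq_bigr => i _.
by rewrite -scalemxAl -scalemxAr om_anti scalerN opprK.
Qed.

Lemma chi_sq : chi *m chi = 1%:M.
Proof.
rewrite /chirality -scalemxAl -scalemxAr scalerA.
rewrite (@prod_sq R n m G rho b Gsym rhoL rhoQ po _ (index_enum_uniq _)) size_ie.
rewrite -rmorph_prod (@prodQ R n G b AL po n0) scale_scalar_mx.
congr (_ %:M).
rewrite -exprMn mulrNN -expr2 sqr_i rmorphXn rmorphN1 mulrA -!exprD.
set k := n./2.
have nk : n = k.*2 by rewrite /k halfK (negbTE neven) subn0.
rewrite -signr_odd.
have k0 : (0 < k)%N by move: n2; rewrite nk; case: (k).
by rewrite nk arith1.
Qed.

Lemma chi_adj : @kadj R m H chi (- chi).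
Proof.
have h := @kadjZ R m H _ _ ((- 'i)%C ^+ (n./2 + n.-1))
  (@kadj_prod R n m G rho H b Gsym rhoL rhoQ po compat _ (index_enum_uniq _)).
move=> a c; rewrite /chirality h size_ie; congr (krein H a (_ *m c)).
rewrite scalerA -scaleNr; congr (_ *: _).
rewrite rmorphXn /= oppr0 opprK.
have -> : ('i : C)%C = - (- 'i)%C by rewrite opprK.
rewrite (exprNn (- 'i)%C) mulrAC -exprD -signr_odd.
set k := n./2.
have nk : n = k.*2 by rewrite /k halfK (negbTE neven) subn0.
have k0 : (0 < k)%N by move: n2; rewrite nk; case: (k).
by rewrite nk arith2 // expr1 mulN1r.
Qed.
End Chi.

Section Space.
Variable R : realType.
Variables (n : nat) (G : 'M[R]_n).
Hypothesis AL : anti_lorentz G.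
Hypothesis n2 : (2 < n)%N.

Lemma spacelike_perp w : exists x, Qform G x < 0 /\ Bform G x w = 0.
Proof.
case: (AL) => Gs [P [Pu PD]].
pose f i := row i P.
have Pf : P = \matrix_i f i by apply/matrixP => i j; rewrite !mxE.
have Bf i j : Bform G (f i) (f j) = (if val i == 0%N then 1 else -1) *+ (i == j).
  by rewrite -(@mx_form R n G _ _ Pf) PD !mxE.
have h1 : (1 < n)%N by apply: ltn_trans n2.
pose i1 := Ordinal h1; pose i2 := Ordinal n2.
have Q1 : Qform G (f i1) = -1 by rewrite /Qform Bf eqxx.
have Q2 : Qform G (f i2) = -1 by rewrite /Qform Bf eqxx.
have B12 : Bform G (f i1) (f i2) = 0 by rewrite Bf.
have B21 : Bform G (f i2) (f i1) = 0 by rewrite Bf.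
pose a := Bform G w (f i1); pose c := Bform G w (f i2).
have [ac0|acn] := eqVneq (a ^+ 2 + c ^+ 2) 0.
  have a0 : a = 0.
    by apply/eqP; move/eqP: ac0; rewrite paddr_eq0 ?sqr_ge0 // !sqrf_eq0 => /andP [].
  exists (f i1); split; first by rewrite Q1 ltrN10.
  by rewrite (@BformC R n G Gs) -/a a0.
exists (c *: f i1 + (- a) *: f i2); split.
  rewrite /Qform !(BformDl, BformDr, BformZl, BformZr) -!/(Qform G _) Q1 Q2 B12 B21.
  have : 0 < a ^+ 2 + c ^+ 2.
    by rewrite lt_def acn addr_ge0 ?sqr_ge0.
  rewrite !expr2 => hp. 
  have -> : c * (c * -1 + - a * 0) + (c * (- a * 0) + - a * (- a * -1)) = - (a * a + c * c) by ring.
  by rewrite oppr_lt0.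
rewrite !(BformDl, BformZl) !(@BformC R n G Gs _ w) -/a -/c; ring.
Qed.
End Space.

Section Main.
Variable R : realType.
Local Notation C := (R[i]).
Variables (n m : nat) (G : 'M[R]_n) (rho : 'rV[R]_n -> 'M[C]_m) (H : 'M[C]_m).
Variable b : 'I_n -> 'rV[R]_n.
Hypothesis Gsym : G^T = G.
Hypothesis rhoL : forall (a : R) (x y : 'rV[R]_n), rho (a *: x + y) = (a%:C)%C *: rho x + rho y.
Hypothesis rhoQ : forall x, rho x *m rho x = ((Qform G x)%:C)%C%:M.
Hypothesis po : pseudo_orthonormal G b.
Hypothesis compat : c_compatible H rho.
Hypothesis AL : anti_lorentz G.
Hypothesis neven : ~~ odd n.
Hypothesis n2 : (2 < n)%N.
Hypothesis m0 : (0 < m)%N.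

Local Notation chi := (chirality rho b).
Local Notation kr := (krein H).

Definition pl (a : 'cV[C]_m) := chi *m a = a.
Definition mi (a : 'cV[C]_m) := chi *m a = - a.

Lemma chiA x : chi *m rho x = - (rho x *m chi).
Proof. exact: (@chi_anti R n m G rho b Gsym rhoL rhoQ po AL neven n2). Qed.
Lemma chiS : chi *m chi = 1%:M.
Proof. exact: (@chi_sq R n m G rho b Gsym rhoL rhoQ po AL neven n2). Qed.
Lemma chiJ : @kadj R m H chi (- chi).
Proof. exact: (@chi_adj R n m G rho H b Gsym rhoL rhoQ po compat neven n2). Qed.

Lemma pl_rho x a : pl a -> mi (rho x *m a).
Proof. by rewrite /pl /mi mulmxA chiA mulNmx -mulmxA => ->. Qed.
Lemma mi_rho x a : mi a -> pl (rho x *m a).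
Proof. by rewrite /pl /mi mulmxA chiA mulNmx -mulmxA => ->; rewrite mulmxN opprK. Qed.

Lemma neutral_pl a c : pl a -> pl c -> kr a c = 0.
Proof.
move=> pa pc; have := chiJ a c; rewrite pa mulNmx pc kreinNr.
by move/eqP; rewrite -addr_eq0 -mulr2n mulrn_eq0 /= => /eqP.
Qed.
Lemma neutral_mi a c : mi a -> mi c -> kr a c = 0.
Proof.
move=> pa pc; have := chiJ a c; rewrite pa mulNmx pc opprK kreinNl.
by move/eqP; rewrite eq_sym -addr_eq0 -mulr2n mulrn_eq0 /= => /eqP.
Qed.

Definition pp (psi : 'cV[C]_m) := 2^-1 *: (psi + chi *m psi).
Definition qq (psi : 'cV[C]_m) := 2^-1 *: (psi - chi *m psi).
Lemma pp_pl psi : pl (pp psi).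
Proof. by rewrite /pl /pp -scalemxAr mulmxDr mulmxA chiS mul1mx addrC. Qed.
Lemma qq_mi psi : mi (qq psi).
Proof. by rewrite /mi /qq -scalemxAr mulmxBr mulmxA chiS mul1mx -scalerN opprB. Qed.
Lemma ppqq psi : psi = pp psi + qq psi.
Proof.
rewrite /pp /qq -scalerDr addrACA subrr addr0.
have -> : psi + psi = 2 *: psi by rewrite scaler_nat mulr2n.
rewrite scalerA.
by rewrite mulVf ?scale1r // pnatr_eq0.
Qed.

Definition posOn (S : 'cV[C]_m -> Prop) w :=
  forall a, S a -> a != 0 -> 0 < kr a (rho w *m a).

Lemma nonneg S w a : posOn S w -> S a -> 0 <= kr a (rho w *m a).
Proof.
move=> P Sa; have [->|an] := eqVneq a 0; first by rewrite krein0l.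
by apply/ltW/P.
Qed.

Lemma split_form psi w :
  kr psi (rho w *m psi) = kr (pp psi) (rho w *m pp psi) + kr (qq psi) (rho w *m qq psi).
Proof.
rewrite {1 2}(ppqq psi) mulmxDr kreinDl !kreinDr.
rewrite (neutral_pl _ _ (pp_pl _) (mi_rho w _ (qq_mi psi))).
rewrite (neutral_mi _ _ (qq_mi _) (pl_rho w _ (pp_pl psi))).
by rewrite addr0 add0r.
Qed.

Lemma pos_split w : krein_positive H (rho w) <-> posOn pl w /\ posOn mi w.
Proof.
split.
  by move=> kp; split => a _ an; apply: kp.
move=> [Pp Pm] psi psin; rewrite split_form.
have [p0|pn] := eqVneq (pp psi) 0.
  have qn : qq psi != 0 by apply: contraNneq psin => q0; rewrite (ppqq psi) p0 q0 addr0.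
  by rewrite p0 krein0l add0r; apply: Pm => //; apply: qq_mi.
by apply: ltr_pwDl; [apply: Pp => //; apply: pp_pl | apply: nonneg Pm (qq_mi _)].
Qed.

Lemma transfer_gen (S S' : 'cV[C]_m -> Prop) w x :
  Qform G x < 0 -> Bform G x w = 0 -> (forall a, S' a -> S (rho x *m a)) ->
  posOn S w -> posOn S' w.
Proof.
move=> Qx Bx SS P a Sa an.
have xw := @rho_anti0 R n m G rho Gsym rhoL rhoQ x w Bx.
have Qn : ((Qform G x)%:C)%C != 0 by rewrite eq_complex /= negb_and (lt_eqF Qx).
have a'n : rho x *m a != 0.
  apply: contraNneq an => h.
  have : rho x *m (rho x *m a) = 0 by rewrite h mulmx0.
  rewrite mulmxA rhoQ mul_scalar_mx => /eqP; rewrite scaler_eq0 (negbTE Qn) /=.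
  by [].
have := P _ (SS _ Sa) a'n.
rewrite compat mulmxA mulmxA xw mulNmx mulNmx -(mulmxA (rho w)) rhoQ -mulmxA mul_scalar_mx -scalemxAr kreinNr kreinZr -mulNr.
rewrite pmulr_rgt0 //.
rewrite -rmorphN /= -(rmorph0 (real_complex R)) ltcR oppr_gt0 //.
Qed.

Lemma transfer w : posOn pl w <-> posOn mi w.
Proof.
have [x [Qx Bx]] := @spacelike_perp R n G AL n2 w.
split; [apply: (transfer_gen _ _ _ _ Qx Bx) => a; exact: mi_rho | apply: (transfer_gen _ _ _ _ Qx Bx) => a; exact: pl_rho].
Qed.

Variables (u v : 'rV[R]_n).
Local Notation A := (rho u + chi *m rho v).

Lemma A_pl a : pl a -> A *m a = rho (u - v) *m a.
Proof.
move=> pa; rewrite mulmxDl -mulmxA.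
have := pl_rho v a pa; rewrite /mi => ->.
by rewrite (@rhoB R n m rho rhoL) mulmxBl.
Qed.
Lemma A_mi a : mi a -> A *m a = rho (u + v) *m a.
Proof.
move=> pa; rewrite mulmxDl -mulmxA.
have := mi_rho v a pa; rewrite /pl => ->.
by rewrite (@rhoD R n m rho rhoL) mulmxDl.
Qed.

Lemma posA : krein_positive H A <-> posOn pl (u - v) /\ posOn mi (u + v).
Proof.
split.
  move=> kp; split => a Sa an; [rewrite -A_pl // | rewrite -A_mi //]; exact: kp.
move=> [Pp Pm] psi psin.
have -> : A *m psi = rho (u - v) *m pp psi + rho (u + v) *m qq psi.
  by rewrite {1}(ppqq psi) mulmxDr (A_pl _ (pp_pl psi)) (A_mi _ (qq_mi psi)).
rewrite {1}(ppqq psi) kreinDl !kreinDr.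
rewrite (neutral_pl _ _ (pp_pl _) (mi_rho _ _ (qq_mi psi))).
rewrite (neutral_mi _ _ (qq_mi _) (pl_rho _ _ (pp_pl psi))) addr0 add0r.
have [p0|pn] := eqVneq (pp psi) 0.
  have qn : qq psi != 0 by apply: contraNneq psin => q0; rewrite (ppqq psi) p0 q0 addr0.
  by rewrite p0 krein0l add0r; apply: Pm => //; apply: qq_mi.
by apply: ltr_pwDl; [apply: Pp => //; apply: pp_pl | apply: nonneg Pm (qq_mi _)].
Qed.

Lemma timelike_of w : krein_positive H (rho w) -> timelike G w.
Proof.
move=> kp.
pose psi : 'cV[C]_m := const_mx 1.
have psin : psi != 0.
  apply/eqP => /matrixP /(_ (Ordinal m0) 0); rewrite !mxE => /eqP; by rewrite oner_eq0.
have p1 := kp psi psin.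
have phin : rho w *m psi != 0 by apply: contraTneq p1 => ->; rewrite krein0r ltxx.
have := kp _ phin.
rewrite mulmxA rhoQ mul_scalar_mx kreinZr compat pmulr_lgt0 //.
by rewrite -(rmorph0 (real_complex R)) ltcR.
Qed.

Lemma main_equiv : krein_positive H A <->
  (future_directed G H rho (u + v) /\ future_directed G H rho (u - v)).
Proof.
rewrite posA.
split.
  move=> [Pp Pm].
  have k1 : krein_positive H (rho (u + v)) by apply/pos_split; split => //; apply/transfer.
  have k2 : krein_positive H (rho (u - v)) by apply/pos_split; split => //; apply/transfer.
  by split; split => //; apply: timelike_of.
move=> [[_ k1] [_ k2]].
by split; [case/pos_split: k2 | case/pos_split: k1].
Qed.
End Main.


Theorem lemma8 (R : realType) (n m : nat) (G : 'M[R]_n)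
    (rho : 'rV[R]_n -> 'M[R[i]]_m) (H : 'M[R[i]]_m)
    (b : 'I_n -> 'rV[R]_n) (u v : 'rV[R]_n) :
  ~~ odd n -> (2 < n)%N ->
  anti_lorentz G ->
  hermitian_mx H -> H \in unitmx ->
  clifford_rep G rho -> c_compatible H rho -> irreducible rho ->
  pseudo_orthonormal G b ->
  krein_positive H (rho u + chirality rho b *m rho v) <->
  (future_directed G H rho (u + v) /\ future_directed G H rho (u - v)).
Proof.
move=> neven n2 AL _ _ [rhoL rhoQ] compat [m0 _] po.
have Gsym : G^T = G by case: AL.
exact: (@main_equiv R n m G rho H b Gsym rhoL rhoQ po compat AL neven n2 m0 u v).
Qed.
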